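(* There are only finitely many (up to isomorphism) finite simple graphs $G$ with chromatic number $\chi(G)=3$ whose adjacency matrix is non-singular and which satisfy $\mathcal{E}(G)<n-1+\bar d$, where $n$ is the order of $G$.
   Context: For a finite simple graph $G$ with $n$ vertices and $m$ edges, $A(G)$ is its adjacency matrix with eigenvalues $\lambda_1\ge\cdots\ge\lambda_n$, and the energy is $\mathcal{E}(G)=\sum_{i=1}^n|\lambda_i|$. $\bar d=2m/n$ is the average degree. *)

(* Defs.v *)
From HB Require Import structures.
From mathcomp Require Import all_boot all_order all_algebra all_field.
Set Implicit Arguments. Unset Strict Implicit. Unset Printing Implicit Defensive.
Import Order.TTheory GRing.Theory Num.Theory.
Local Open Scope ring_scope.

Definition simple_graph (n : nat) (e : rel 'I_n) : Prop :=
  symmetric e /\ irreflexive e.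

Definition adj_mx (n : nat) (e : rel 'I_n) : 'M[algC]_n :=
  \matrix_(i, j) (e i j)%:R.

(* Eigenvalues of A(G), with multiplicity: the roots of its characteristic
   polynomial over the algebraically closed field algC (the polynomial is
   monic, so it equals \prod_(z <- eigenvalues) ('X - z)). *)
Definition adj_eigenvalues (n : nat) (e : rel 'I_n) : seq algC :=
  sval (closed_field_poly_normal (char_poly (adj_mx e))).

Definition energy (n : nat) (e : rel 'I_n) : algC :=
  \sum_(z <- adj_eigenvalues e) `|z|.

Definition num_edges (n : nat) (e : rel 'I_n) : nat :=
  #|[set p : 'I_n * 'I_n | (p.1 < p.2)%N && e p.1 p.2]|.

Definition avg_degree (n : nat) (e : rel 'I_n) : algC :=
  (2 * num_edges e)%:R / n%:R.

Definition colorable (n : nat) (e : rel 'I_n) (k : nat) : Prop :=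
  exists f : 'I_n -> 'I_k, forall x y, e x y -> f x != f y.

Definition chromatic_number_is (n : nat) (e : rel 'I_n) (k : nat) : Prop :=
  colorable e k /\ forall j, (j < k)%N -> ~ colorable e j.

Definition graph_iso (n m : nat) (e : rel 'I_n) (e' : rel 'I_m) : Prop :=
  exists f : 'I_n -> 'I_m, bijective f /\ forall x y, e x y = e' (f x) (f y).

(* Main.v *)
Require Import Defs.
From HB Require Import structures.
From mathcomp Require Import all_boot all_order all_algebra all_field.
From mathcomp Require Import zify ring.
Set Implicit Arguments. Unset Strict Implicit. Unset Printing Implicit Defensive.
Import Order.TTheory GRing.Theory Num.Theory.
Local Open Scope ring_scope.

Lemma char_poly_similar n (P D : 'M[algC]_n) : P \in unitmx ->
  char_poly (invmx P *m D *m P) = char_poly D.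
Proof.
move=> Pu; rewrite /char_poly /char_poly_mx !map_mxM.
set Q' := map_mx polyC (invmx P); set P' := map_mx polyC P.
set D' := map_mx _ D.
have QP : Q' *m P' = 1%:M by rewrite -map_mxM mulVmx // map_mx1.
have eX : Q' *m 'X%:M *m P' = ('X%:M : 'M[{poly algC}]_n).
  by rewrite -mulmxA -scalar_mxC mulmxA QP mul1mx.
have -> : 'X%:M - Q' *m D' *m P' = Q' *m ('X%:M - D') *m P'.
  by rewrite mulmxBr mulmxBl eX.
by rewrite !det_mulmx mulrC mulrA -det_mulmx (mulmx1C QP) det1 mul1r.
Qed.

Lemma adj_spectral n (e : rel 'I_n) : simple_graph e ->
  adj_mx e = invmx (spectralmx (adj_mx e)) *m diag_mx (spectral_diag (adj_mx e))
     *m spectralmx (adj_mx e)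
  /\ spectral_diag (adj_mx e) \is a realmx.
Proof.
move=> [esym eirr].
have Asym : adj_mx e \is symmetricmx.
  apply/is_hermitianmxP; apply/matrixP => i j.
  by rewrite !mxE expr0 mul1r esym.
have Areal : adj_mx e \is a realmx.
  by apply/mxOverP => i j; rewrite mxE realn.
split; last by apply: hermitian_spectral_diag_real; apply: realsym_hermsym.
by apply/orthomx_spectralP; apply: symmetric_normalmx.
Qed.

Lemma adj_eig_perm n (e : rel 'I_n) : simple_graph e ->
  perm_eq (adj_eigenvalues e)
    [seq spectral_diag (adj_mx e) 0 i | i <- enum 'I_n].
Proof.
move=> /adj_spectral [EA _].
apply: prod_XsubC_eq.
rewrite /adj_eigenvalues; case: closed_field_poly_normal => s /= Hs.
rewrite big_map big_enum /=.
have := char_poly_monic (adj_mx e); rewrite monicE => /eqP Hl.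
rewrite Hl scale1r in Hs; rewrite -Hs {1}EA char_poly_similar ?spectral_unit //.
rewrite char_poly_trig ?diag_mx_is_trig //.
by apply: eq_bigr => i _; rewrite mxE eqxx mulr1n.
Qed.

Lemma energy_diag n (e : rel 'I_n) : simple_graph e ->
  energy e = \sum_i `|spectral_diag (adj_mx e) 0 i|.
Proof.
move=> /adj_eig_perm pe; rewrite /energy (perm_big _ pe) big_map big_enum //.
Qed.

Lemma det_diag_adj n (e : rel 'I_n) : simple_graph e ->
  \det (adj_mx e) = \prod_i spectral_diag (adj_mx e) 0 i.
Proof.
move=> /adj_spectral [EA _].
rewrite {1}EA !det_mulmx det_diag mulrC mulrA -det_mulmx mulmxV ?spectral_unit //.
by rewrite det1 mul1r.
Qed.

Lemma trace_adj n (e : rel 'I_n) : simple_graph e ->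
  \sum_i `|spectral_diag (adj_mx e) 0 i| ^+ 2 = \sum_i \sum_j (e i j)%:R.
Proof.
move=> Hs; have [EA Dr] := adj_spectral Hs; case: Hs => esym _.
have Pu := spectral_unit (adj_mx e).
have -> : \sum_i `|spectral_diag (adj_mx e) 0 i| ^+ 2 = \tr (adj_mx e *m adj_mx e).
  move: EA Dr Pu; set A := adj_mx e; set P := spectralmx A; set d := spectral_diag A.
  clearbody P d => EA Dr Pu.
  rewrite EA !mulmxA mulmxK // mxtrace_mulC !mulmxA mulmxV //.
  rewrite mul1mx mulmx_diag mxtrace_diag; apply: eq_bigr => i _.
  rewrite mxE real_normK ?expr2 //.
  by move/mxOverP: Dr; apply.
rewrite /mxtrace; apply: eq_bigr => i _; rewrite !mxE.
apply: eq_bigr => j _.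
by rewrite /adj_mx !mxE (esym j i); case: (e i j); rewrite ?mulr1 ?mulr0.
Qed.

Section NatPart.
Local Open Scope nat_scope.
Lemma sum_edges n (e : rel 'I_n) : simple_graph e ->
  (\sum_i \sum_j (e i j : nat) = 2 * num_edges e)%N.
Proof.
move=> [esym eirr].
rewrite pair_bigA /=.
have -> : (\sum_(p : 'I_n * 'I_n) (e p.1 p.2 : nat) =
    \sum_(p : 'I_n * 'I_n) ((p.1 < p.2) && e p.1 p.2 : nat) +
    \sum_(p : 'I_n * 'I_n) ((p.2 < p.1) && e p.1 p.2 : nat))%N.
  rewrite -big_split /=; apply: eq_bigr => [[i j]] _ /=.
  case: (ltngtP i j) => [//|//|/val_inj ->]; first by rewrite addn0.
  by rewrite eirr.
have -> : (\sum_(p : 'I_n * 'I_n) ((p.2 < p.1) && e p.1 p.2 : nat) =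
    \sum_(p : 'I_n * 'I_n) ((p.1 < p.2) && e p.1 p.2 : nat))%N.
  have sw_inj : injective (fun p : 'I_n * 'I_n => (p.2, p.1)).
    by move=> [a b] [c d] /= [-> ->].
  rewrite (reindex_inj sw_inj) /=.
  by apply: eq_bigr => [[i j]] _ /=; rewrite esym.
rewrite /num_edges -sum1_card.
rewrite mul2n -addnn; congr (_ + _); rewrite [RHS]big_mkcond; apply: eq_bigr => p _;
  by rewrite inE; case: (_ && _).
Qed.

Lemma edges_3col n (e : rel 'I_n) : colorable e 3 ->
  (3 * \sum_i \sum_j (e i j : nat) <= 2 * n ^ 2)%N.
Proof.
move=> [f Hf].
pose a (c : 'I_3) := #|[set i | f i == c]|.
have H1 : (\sum_i \sum_j (e i j : nat) + \sum_i \sum_j (f i == f j : nat) <= n ^ 2)%N.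
  rewrite -big_split /=.
  have -> : (n ^ 2 = \sum_(i < n) n)%N by rewrite sum_nat_const card_ord; lia.
  apply: leq_sum => i _; rewrite -big_split /=.
  rewrite -[X in (_ <= X)%N]card_ord -sum1_card.
  apply: leq_sum => j _.
  by case E: (e i j); [rewrite (negbTE (Hf _ _ E)) | case: (_ == _)].
have H2 : (\sum_i \sum_j (f i == f j : nat) = \sum_c a c * a c)%N.
  have -> : (\sum_i \sum_j (f i == f j : nat) = \sum_i a (f i))%N.
    apply: eq_bigr => i _; rewrite /a -sum1_card [RHS]big_mkcond /=.
    by apply: eq_bigr => j _; rewrite inE eq_sym; case: (_ == _).
  rewrite (partition_big f predT) //=; apply: eq_bigr => c _.
  rewrite (eq_bigr (fun _ => a c)); last by move=> i /eqP ->.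
  by rewrite sum_nat_const /a; congr (_ * _); apply: eq_card => i; rewrite inE.
have H3 : (\sum_c a c = n)%N.
  rewrite -[RHS]card_ord -sum1_card (partition_big f predT) //=.
  apply: eq_bigr => c _; rewrite /a -sum1_card big_mkcond /= [RHS]big_mkcond /=.
  by apply: eq_bigr => i _; rewrite inE.
rewrite !big_ord_recr /= !big_ord0 in H2 H3.
have key : forall x y z : nat, ((x+y+z)^2 <= 3*(x*x+y*y+z*z))%N.
  have aux : forall x y : nat, (2*(x*y) <= x*x+y*y)%N.
    move=> x y; case: (leqP x y) => h.
      by move: (subnK h); move: (y - x) => k <-; nia.
    by move: (subnK (ltnW h)); move: (x - y) => k <-; nia.
  move=> x y z; rewrite [X in (X <= _)%N]expnS expn1.
  have := aux x y; have := aux y z; have := aux x z; nia.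
move: H1 H2 H3.
set S := \sum_i \sum_j _; set T := \sum_i \sum_j _.
move: (a _) (a _) (a _) => x y z H1 H2 H3.
have := key x y z; lia.
Qed.

End NatPart.

Lemma ge0_of_mul (k : nat) (t : algC) : (0 < k)%N -> 0 <= k%:R * t -> 0 <= t.
Proof. by move=> k0; rewrite pmulr_rge0 // ltr0n. Qed.

Lemma sq_le (a b : algC) : 0 <= a -> 0 <= b -> a ^+ 2 <= b ^+ 2 -> a <= b.
Proof. by move=> a0 b0; rewrite ler_pXn2r // nnegrE. Qed.

Lemma sum_y_ge n (y : 'I_n -> algC) : (0 < n)%N -> (forall i, 0 <= y i) ->
  1 <= \prod_i y i -> n%:R <= \sum_i y i.
Proof.
move=> n0 y0 p1.
have := (leif_AGM (A := predT) (fun i _ => y0 i)).1; rewrite card_ord => H.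
have mu0 : 0 <= (\sum_(i in predT) y i) / n%:R by rewrite divr_ge0 ?sumr_ge0 ?ler0n.
have H' : 1 <= (\sum_(i in predT) y i) / n%:R.
  rewrite -(ler_pXn2r n0) ?nnegrE // expr1n.
  apply: le_trans p1 _; apply: le_trans H; by [].
by rewrite ler_pdivlMr ?ltr0n // mul1r in H'.
Qed.

Lemma main_ineq n (x : 'I_n -> algC) (S2 : algC) :
  (900 <= n)%N -> (forall i, 0 < x i) -> 1 <= \prod_i x i ->
  \sum_i x i ^+ 2 = S2 -> 100%:R * S2 <= 81%:R * n%:R ^+ 2 ->
  n%:R * (n%:R - 1) + S2 <= n%:R * \sum_i x i.
Proof.
move=> n900 x0 p1 eS2 hS2.
have n0 : (0 < n)%N by apply: leq_trans n900.
pose y i := sqrtC (x i).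
have y0 i : 0 <= y i by rewrite sqrtC_ge0 ltW.
have yx i : x i = y i ^+ 2 by rewrite sqrtCK.
have sy : n%:R <= \sum_i y i.
  apply: sum_y_ge => //; apply: sq_le; rewrite ?prodr_ge0 // expr1n.
  by rewrite -prodrXl; under eq_bigr do rewrite -yx.
have S20 : 0 <= S2 by rewrite -eS2 sumr_ge0 // => i _; rewrite exprn_ge0 // ltW.
have xb i : 10%:R * x i <= 9%:R * n%:R.
  apply: sq_le; [by rewrite mulr_ge0 ?ler0n ?ltW | by rewrite mulr_ge0 ?ler0n |].
  have : x i ^+ 2 <= S2.
    rewrite -eS2 (bigD1 i) //= lerDl sumr_ge0 // => j _.
    by rewrite exprn_ge0 // ltW.
  move=> h; rewrite !exprMn.
  apply: le_trans (_ : 100%:R * S2 <= _); last by rewrite -natrX.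
  by rewrite -natrX ler_wpM2l ?ler0n.
have nn0 : (0 : algC) <= n%:R by rewrite ler0n.
have yb i : 30%:R * y i <= n%:R.
  apply: sq_le; [by rewrite mulr_ge0 ?ler0n | by [] |].
  rewrite exprMn -yx -natrX.
  apply: le_trans (_ : 90%:R * (10%:R * x i) <= _).
    by rewrite mulrA -natrM; exact: lexx.
  apply: le_trans (ler_wpM2l (ler0n _ 90) (xb i)) _.
  rewrite mulrA -natrM expr2 ler_wpM2r // ler_nat.
  by apply: leq_trans n900.
have pt i : 2%:R * (n%:R - 2%:R) * y i + x i ^+ 2 <= n%:R * x i + (n%:R - 3%:R).
  rewrite -subr_ge0 yx.
  have -> : n%:R * y i ^+ 2 + (n%:R - 3%:R) - (2%:R * (n%:R - 2%:R) * y i + (y i ^+ 2) ^+ 2)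
     = (y i - 1) ^+ 2 * (n%:R - 3%:R - 2%:R * y i - y i ^+ 2) by ring.
  apply: mulr_ge0; first by rewrite -realEsqr rpredB // ?ger0_real.

  apply: (@ge0_of_mul 30) => //.
  have -> : 30%:R * (n%:R - 3%:R - 2%:R * y i - y i ^+ 2) =
     (n%:R - 90%:R) + 2%:R * (n%:R - 30%:R * y i) + 3%:R * (9%:R * n%:R - 10%:R * x i)
     :> algC.
    rewrite yx; ring.
  apply: addr_ge0; first apply: addr_ge0.
  - by rewrite subr_ge0 ler_nat; apply: leq_trans n900.
  - by rewrite mulr_ge0 ?ler0n // subr_ge0 yb.
  - by rewrite mulr_ge0 ?ler0n // subr_ge0 xb.
have : \sum_i (2%:R * (n%:R - 2%:R) * y i + x i ^+ 2) <= \sum_i (n%:R * x i + (n%:R - 3%:R)).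
  by apply: ler_sum => i _; apply: pt.
rewrite !big_split /= -!mulr_sumr eS2 sumr_const card_ord.
move=> h.
rewrite sumr_const card_ord in h.
move: h sy; set Sx := \sum_(i < n) x i; set Sy := \sum_(i < n) y i => h sy.
rewrite -subr_ge0.
have -> : n%:R * Sx - (n%:R * (n%:R - 1) + S2) =
   (n%:R * Sx + (n%:R *+ n + -3%:R *+ n) - (2%:R * (n%:R - 2%:R) * Sy + S2))
   + 2%:R * (n%:R - 2%:R) * (Sy - n%:R).
  rewrite -[n%:R *+ n]mulr_natr -[-3%:R *+ n]mulr_natr; ring.
apply: addr_ge0; first by rewrite subr_ge0.
apply: mulr_ge0; last by rewrite subr_ge0.
rewrite mulr_ge0 ?ler0n // subr_ge0 ler_nat.
by apply: leq_trans n900.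
Qed.

Lemma det_int n (e : rel 'I_n) : \det (adj_mx e) \is a Num.int.
Proof.
rewrite /determinant; apply: rpred_sum => s _; apply: rpredM.
  by apply: rpredX; rewrite rpredN rpred1.
by apply: rpred_prod => i _; rewrite mxE; apply: rpred_nat.
Qed.

Lemma no_big_graph n (e : rel 'I_n) : (900 <= n)%N ->
  simple_graph e -> chromatic_number_is e 3 -> \det (adj_mx e) != 0 ->
  ~ (energy e < n%:R - 1 + avg_degree e).
Proof.
move=> n900 Hs [Hc _] Hdet Hlt.
have n0 : (0 < n)%N by apply: leq_trans n900.
set d := spectral_diag (adj_mx e) in Hlt.
pose x i := `|d 0 i|.
pose S2 : algC := (2 * num_edges e)%:R.
have dprod := det_diag_adj Hs.
have x0 i : 0 < x i.
  rewrite normr_gt0; move: Hdet; rewrite dprod => /prodf_neq0; apply.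
  by [].
have p1 : 1 <= \prod_i x i.
  by rewrite /x -normr_prod -dprod norm_intr_ge1 // det_int.
have eS2 : \sum_i x i ^+ 2 = S2.
  by rewrite /x trace_adj // /S2 -sum_edges // natr_sum; apply: eq_bigr => i _; rewrite natr_sum.
have hS2 : 100%:R * S2 <= 81%:R * n%:R ^+ 2.
  have := edges_3col Hc; rewrite sum_edges // => h.
  rewrite /S2 -natrX -!natrM ler_nat; lia.
have := main_ineq n900 x0 p1 eS2 hS2.
rewrite -energy_diag // -/S2 => hE.
have : n%:R * energy e < n%:R * (n%:R - 1 + avg_degree e).
  by rewrite ltr_pM2l ?ltr0n.
have -> : n%:R * (n%:R - 1 + avg_degree e) = n%:R * (n%:R - 1) + S2.
  rewrite /avg_degree -/S2 mulrDr mulrCA divff ?mulr1 //.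
  by rewrite pnatr_eq0 -lt0n.
by move=> /lt_geF; rewrite hE.
Qed.

Notation GT := {m : 'I_900 & {ffun 'I_m * 'I_m -> bool}}.

Theorem theorem3p4 :
  exists (k : nat) (ns : 'I_k -> nat) (gs : forall i : 'I_k, rel 'I_(ns i)),
    forall (n : nat) (e : rel 'I_n),
      simple_graph e ->
      chromatic_number_is e 3 ->
      \det (adj_mx e) != 0 ->
      energy e < n%:R - 1 + avg_degree e ->
      exists i : 'I_k, graph_iso e (gs i).
Proof.
exists #|{: GT}|, (fun i => nat_of_ord (tag (@enum_val GT predT i))),
  (fun i => fun x y => (tagged (@enum_val GT predT i) : {ffun _ -> bool}) (x, y)).
move=> n e Hs Hc Hdet Hlt.
case: (ltnP n 900) => [Hn|Hn]; last by case: (no_big_graph Hn Hs Hc Hdet Hlt).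
exists (enum_rank (@Tagged 'I_900 (Ordinal Hn) (fun m : 'I_900 => {ffun 'I_m * 'I_m -> bool})
                  [ffun p : 'I_n * 'I_n => e p.1 p.2])).
rewrite enum_rankK /=.
exists id; split; first by exists id.
by move=> x y; rewrite ffunE.
Qed.
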